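(* There is an absolute constant $c>0$ such that the following holds. Let $P$ be any (not necessarily reversible) Markov chain on a finite set $X$, let $S,M\subseteq X$ be disjoint, let $\kappa$ be a distribution supported on $S$, and let $T\ge2$ be an even integer. Let $Y=(Y_i)_{i\ge0}$ be the chain with transition matrix $P$ and $Y_0\sim\kappa$, and let $E$ be the event that $\mathrm{ct}\le T$ and $S_Y[0,\mathrm{ht}]=1$; assume $\Pr(E)>0$. Set $r_S=T/2$, and for $r_M\in R=\{1,2,4,\dots,2^{\lceil\log_2(14T)\rceil}\}$ let $Y^{(r)}$, $r=(r_S,r_M)$, be obtained from $Y$ by replacing each entry $Y_i\in S$ by an independent $\mathrm{Geom}(1/r_S)$ number of consecutive copies and each entry $Y_i\in M$ by an independent $\mathrm{Geom}(1/r_M)$ number of consecutive copies. If $r_M\in R$, $t\in\{1,\dots,30T\}$ and $t'\in\{1,\dots,30T\}$ are chosen independently and uniformly at random, then \[ \mathbb E_{t,t',r_M}\Big[\Pr\big(Y^{(r)}_t\in M,\;Y^{(r)}_{t+t'}\in S\ \big|\ E\big)\Big]\ge\frac{c}{\log T}. \]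
   Context: For a sequence $Y$: $\mathrm{ht}=\min\{i\ge0:Y_i\in M\}$, $\mathrm{ct}=\min\{i>\mathrm{ht}:Y_i\in S\}$, and $S_Y[0,\mathrm{ht}]=|\{i\in\{0,\dots,\mathrm{ht}\}:Y_i\in S\}|$. $\mathrm{Geom}(1/r)$ denotes the distribution on $\{1,2,\dots\}$ with $\Pr(K=k)=(1-1/r)^{k-1}/r$ (mean $r$). Sequences are indexed from $0$. *)

(* Defs.v *)
From Stdlib Require Import Reals List Arith ClassicalEpsilon.
Import ListNotations.
Open Scope R_scope.

(** States of the finite set X are 0, ..., n-1.  Subsets are boolean predicates. *)

Definition sumR (l : list R) : R := fold_right Rplus 0 l.
Definition ind (b : bool) : R := if b then 1 else 0.

Fixpoint tuples (vals : list nat) (D : nat) : list (list nat) :=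
  match D with
  | O => [nil]
  | S D' => flat_map (fun a => map (cons a) (tuples vals D')) vals
  end.

Definition sum_tuples (vals : list nat) (D : nat) (F : list nat -> R) : R :=
  sumR (map F (tuples vals D)).

Fixpoint chain_w (P : nat -> nat -> R) (x : nat) (l : list nat) : R :=
  match l with
  | nil => 1
  | y :: l' => P x y * chain_w P y l'
  end.

Definition path_weight (kappa : nat -> R) (P : nat -> nat -> R) (y : list nat) : R :=
  match y with
  | nil => 0
  | y0 :: l => kappa y0 * chain_w P y0 l
  end.

Definition geom (r : R) (k : nat) : R :=
  match k with
  | O => 0
  | S k' => (1 - / r) ^ k' * / r
  end.

(** Law of the number of copies of an entry x: Geom(1/rS) if x in S,
    Geom(1/rM) if x in M, and exactly one copy otherwise. *)
Definition rep_w (rS rM : R) (S M : nat -> bool) (x k : nat) : R :=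
  if S x then geom rS k else if M x then geom rM k else ind (Nat.eqb k 1).

Fixpoint cnt_w (rS rM : R) (S M : nat -> bool) (y k : list nat) : R :=
  match y, k with
  | y0 :: y', k0 :: k' => rep_w rS rM S M y0 k0 * cnt_w rS rM S M y' k'
  | _, _ => 1
  end.

(** Y^(r): each entry y_i replaced by k_i consecutive copies. *)
Definition expand (y k : list nat) : list nat :=
  flat_map (fun p => repeat (snd p) (fst p)) (combine k y).

Fixpoint first_idx (p : nat -> bool) (l : list nat) : option nat :=
  match l with
  | nil => None
  | x :: l' => if p x then Some O else option_map S (first_idx p l')
  end.

Definition countb (p : nat -> bool) (l : list nat) : nat :=
  length (filter p l).

(** The event E: ct <= T and S_Y[0,ht] = 1, where ht = first index i >= 0
    with Y_i in M and ct = first index i > ht with Y_i in S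
    (evaluated on a prefix y of Y of length >= T+1). *)
Definition E_ev (S M : nat -> bool) (T : nat) (y : list nat) : bool :=
  match first_idx M y with
  | None => false
  | Some h =>
      match first_idx S (skipn (Datatypes.S h) y) with
      | None => false
      | Some d =>
          Nat.leb (Datatypes.S h + d) T &&
          Nat.eqb (countb S (firstn (Datatypes.S h) y)) 1
      end
  end.

(** Supremum (of a set of reals), chosen classically; used for countable sums
    of nonnegative terms. *)
Definition Rsup (A : R -> Prop) : R := epsilon (inhabits 0) (fun l => is_lub A l).

(** Number of entries of Y needed: indices of Y^(r) up to 60T. *)
Definition Dlen (T : nat) : nat := 60 * T + 1.

Definition probE (n : nat) (P : nat -> nat -> R) (kappa : nat -> R)
  (S M : nat -> bool) (T : nat) : R :=
  sum_tuples (seq 0 n) (Dlen T) (fun y => path_weight kappa P y * ind (E_ev S M T y)).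

(** Partial sums (copy numbers truncated at <= L) of
    Pr(Y^(r)_t in M, Y^(r)_{t+t'} in S, E), r = (rS, rM). *)
Definition joint_partial (n : nat) (P : nat -> nat -> R) (kappa : nat -> R)
  (S M : nat -> bool) (T : nat) (rS rM : R) (t t' L : nat) : R :=
  sum_tuples (seq 0 n) (Dlen T) (fun y =>
    sum_tuples (seq 1 L) (Dlen T) (fun k =>
      path_weight kappa P y * cnt_w rS rM S M y k *
      ind (E_ev S M T y && M (nth t (expand y k) 0%nat)
                        && S (nth (t + t') (expand y k) 0%nat)))).

Definition joint (n : nat) (P : nat -> nat -> R) (kappa : nat -> R)
  (S M : nat -> bool) (T : nat) (rS rM : R) (t t' : nat) : R :=
  Rsup (fun x => exists L, x = joint_partial n P kappa S M T rS rM t t' L).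

Definition cond_prob n P kappa S M T rS rM t t' : R :=
  joint n P kappa S M T rS rM t t' / probE n P kappa S M T.

(** R = {2^0, ..., 2^J}, J = ceil(log2(14T)). *)
Definition Jmax (T : nat) : nat := Nat.log2_up (14 * T).

Definition avg_cond (n : nat) (P : nat -> nat -> R) (kappa : nat -> R)
  (S M : nat -> bool) (T : nat) : R :=
  sumR (map (fun t => sumR (map (fun t' => sumR (map (fun j =>
      cond_prob n P kappa S M T (INR T / 2) (2 ^ j) t t')
    (seq 0 (Jmax T + 1)))) (seq 1 (30 * T)))) (seq 1 (30 * T)))
  / (INR (30 * T) * INR (30 * T) * INR (Jmax T + 1)).

(* Main.v *)
Require Import Defs.
From Stdlib Require Import Reals List Arith Lia Lra ClassicalEpsilon.
Require Import Defs.
Import ListNotations.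
Open Scope R_scope.

Definition prodR (l : list R) : R := fold_right Rmult 1 l.

Lemma sumR_app : forall l1 l2, sumR (l1 ++ l2) = sumR l1 + sumR l2.
Proof. induction l1; intros; simpl; [lra|]. rewrite IHl1; lra. Qed.

Lemma sum_plus : forall {A} (f g : A -> R) l,
  sumR (map (fun x => f x + g x) l) = sumR (map f l) + sumR (map g l).
Proof. induction l; simpl; [lra|]. rewrite IHl; lra. Qed.

Lemma sum_minus : forall {A} (f g : A -> R) l,
  sumR (map (fun x => f x - g x) l) = sumR (map f l) - sumR (map g l).
Proof. induction l; simpl; [lra|]. rewrite IHl; lra. Qed.

Lemma sum_scal : forall {A} c (f : A -> R) l,
  sumR (map (fun x => c * f x) l) = c * sumR (map f l).
Proof. induction l; simpl; [lra|]. rewrite IHl; lra. Qed.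

Lemma sum_scar : forall {A} c (f : A -> R) l,
  sumR (map (fun x => f x * c) l) = sumR (map f l) * c.
Proof. induction l; simpl; [lra|]. rewrite IHl; lra. Qed.

Lemma sum_ext : forall {A} (f g : A -> R) l,
  (forall x, In x l -> f x = g x) -> sumR (map f l) = sumR (map g l).
Proof. intros. f_equal. apply map_ext_in. auto. Qed.

Lemma sum_le : forall {A} (f g : A -> R) l,
  (forall x, In x l -> f x <= g x) -> sumR (map f l) <= sumR (map g l).
Proof. induction l; simpl; intros; [lra|].
  assert (f a <= g a) by auto. assert (sumR (map f l) <= sumR (map g l)) by auto. lra. Qed.

Lemma sum_nonneg : forall {A} (f : A -> R) l,
  (forall x, In x l -> 0 <= f x) -> 0 <= sumR (map f l).
Proof. induction l; simpl; intros; [lra|].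
  assert (0 <= f a) by auto. assert (0 <= sumR (map f l)) by auto. lra. Qed.

Lemma sum_swap : forall {A B} (F : A -> B -> R) la lb,
  sumR (map (fun a => sumR (map (fun b => F a b) lb)) la) =
  sumR (map (fun b => sumR (map (fun a => F a b) la)) lb).
Proof. induction la; simpl; intros.
  - induction lb; simpl; [lra|]. rewrite <- IHlb. lra.
  - rewrite IHla. rewrite <- sum_plus. reflexivity. Qed.

Lemma sum_const : forall {A} c (l : list A), sumR (map (fun _ => c) l) = INR (length l) * c.
Proof. induction l; simpl; [lra|]. rewrite IHl. destruct (length l); simpl; lra. Qed.

Lemma sum_flat_map : forall {A B} (F : B -> R) (g : A -> list B) l,
  sumR (map F (flat_map g l)) = sumR (map (fun a => sumR (map F (g a))) l).
Proof. induction l; simpl; [lra|]. rewrite map_app, sumR_app, IHl. lra. Qed.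

Lemma sum_ge_mem : forall {A} (f : A -> R) l x,
  (forall y, In y l -> 0 <= f y) -> In x l -> f x <= sumR (map f l).
Proof. induction l; simpl; intros; [contradiction|].
  destruct H0 as [<-|H0].
  - assert (0 <= sumR (map f l)) by (apply sum_nonneg; auto). lra.
  - assert (f x <= sumR (map f l)) by (apply IHl; auto). assert (0 <= f a) by auto. lra. Qed.


Lemma ind_and : forall a b : bool, ind (andb a b) = ind a * ind b.
Proof. destruct a, b; unfold ind; simpl; lra. Qed.
Lemma ind_01 : forall b : bool, 0 <= ind b <= 1.
Proof. destruct b; unfold ind; lra. Qed.

Lemma sum_point : forall (F : nat -> R) n a p, (a <= p < a + n)%nat ->
  sumR (map (fun x => ind (Nat.eqb x p) * F x) (seq a n)) = F p.
Proof. induction n; intros; [lia|]. simpl.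
  destruct (Nat.eqb_spec a p).
  - subst. rewrite (sum_ext _ (fun _ => 0)).
    + rewrite sum_const. unfold ind; simpl; lra.
    + intros x Hx. apply in_seq in Hx. destruct (Nat.eqb_spec x p); [lia|]. unfold ind; lra.
  - rewrite IHn by lia. unfold ind; lra. Qed.

Lemma INR_filter : forall {A} (p : A -> bool) l,
  INR (length (filter p l)) = sumR (map (fun x => ind (p x)) l).
Proof. induction l; simpl; [reflexivity|]. destruct (p a); simpl; rewrite <- IHl;
  unfold ind; [|lra]. change (INR (S (length (filter p l))) = 1 + INR (length (filter p l))). rewrite S_INR; lra. Qed.

Lemma prod_nonneg : forall {A} (F : A -> R) l,
  (forall x, In x l -> 0 <= F x) -> 0 <= prodR (map F l).
Proof. induction l; simpl; intros; [lra|]. apply Rmult_le_pos; auto. Qed.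


Lemma prod_le : forall {A} (F G : A -> R) l,
  (forall x, In x l -> 0 <= F x <= G x) -> prodR (map F l) <= prodR (map G l).
Proof. induction l; simpl; intros; [lra|].
  assert (0 <= F a <= G a) by auto.
  assert (0 <= prodR (map F l)) by (apply prod_nonneg; intros; apply H; auto).
  assert (prodR (map F l) <= prodR (map G l)) by auto.
  apply Rmult_le_compat; lra. Qed.

Lemma prod_mult : forall {A} (F G : A -> R) l,
  prodR (map (fun x => F x * G x) l) = prodR (map F l) * prodR (map G l).
Proof. induction l; simpl; [lra|]. rewrite IHl; ring. Qed.

Lemma prod_const : forall {A} c (l : list A), prodR (map (fun _ => c) l) = c ^ length l.
Proof. induction l; simpl; [lra|]. rewrite IHl; ring. Qed.

Lemma prod_ext : forall {A} (f g : A -> R) l,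
  (forall x, In x l -> f x = g x) -> prodR (map f l) = prodR (map g l).
Proof. intros. f_equal. apply map_ext_in. auto. Qed.

Lemma prod_pt : forall c n a p, (a <= p < a + n)%nat ->
  prodR (map (fun x => if Nat.eqb x p then c else 1) (seq a n)) = c.
Proof. induction n; intros; [lia|]. simpl.
  destruct (Nat.eqb_spec a p).
  - subst. rewrite (prod_ext _ (fun _ => 1)).
    + rewrite prod_const. rewrite pow1. lra.
    + intros x Hx. apply in_seq in Hx. destruct (Nat.eqb_spec x p); [lia|]. lra.
  - rewrite IHn by lia. lra. Qed.

Lemma prod_nz : forall {A} (F : A -> R) l x, prodR (map F l) <> 0 -> In x l -> F x <> 0.
Proof. induction l; simpl; intros; [contradiction|]. destruct H0 as [<-|H0].
  - intro E. apply H. rewrite E. ring.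
  - apply IHl; auto. intro E. apply H. rewrite E; ring. Qed.

Fixpoint pf (f : nat -> nat -> R) (k : list nat) : R :=
  match k with nil => 1 | a :: k' => f O a * pf (fun l => f (S l)) k' end.

Definition Ef (rS rM : R) (S M : nat -> bool) (y : list nat) (L : nat)
  (f : nat -> nat -> R) (l : nat) : R :=
  sumR (map (fun a => rep_w rS rM S M (nth l y O) a * f l a) (seq 1 L)).

Lemma sumR_single : forall x, sumR [x] = x.
Proof. intros; simpl; lra. Qed.

Lemma prod_measure : forall rS rM Sp Mp L D y f, length y = D ->
  sum_tuples (seq 1 L) D (fun k => cnt_w rS rM Sp Mp y k * pf f k) =
  prodR (map (Ef rS rM Sp Mp y L f) (seq 0 D)).
Proof.
  intros rS rM Sp Mp L D. induction D; intros y f Hl.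
  - destruct y; [|simpl in Hl; lia]. unfold sum_tuples. simpl. lra.
  - destruct y as [|y0 y']; [simpl in Hl; lia|]. simpl in Hl. injection Hl as Hl.
    unfold sum_tuples in *. simpl tuples. rewrite sum_flat_map.
    rewrite (sum_ext _ (fun a => (rep_w rS rM Sp Mp y0 a * f O a) *
       sumR (map (fun k => cnt_w rS rM Sp Mp y' k * pf (fun l => f (S l)) k) (tuples (seq 1 L) D)))).
    2:{ intros a _. rewrite map_map. rewrite <- sum_scal. apply sum_ext. intros k _. simpl. ring. }
    rewrite sum_scar. rewrite IHD by auto.
    unfold prodR. change (seq 0 (Datatypes.S D)) with (0%nat :: seq 1 D). cbn [map fold_right].
    f_equal.
    unfold Ef. rewrite <- (seq_shift D 0), map_map. reflexivity. Qed.

Lemma pf_eval : forall k f, pf f k = prodR (map (fun l => f l (nth l k O)) (seq 0 (length k))).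
Proof. induction k; intros f; simpl; [reflexivity|]. rewrite IHk.
  rewrite <- seq_shift, map_map. reflexivity. Qed.

Lemma tuples_in : forall vals D k, In k (tuples vals D) ->
  length k = D /\ forall x, In x k -> In x vals.
Proof. induction D; simpl; intros k H.
  - destruct H as [<-|[]]. simpl; split; auto; intros _ [].
  - apply in_flat_map in H. destruct H as [a [Ha Hk]]. apply in_map_iff in Hk.
    destruct Hk as [k' [<- Hk']]. apply IHD in Hk'. destruct Hk' as [H1 H2].
    simpl. split; [lia|]. intros x [<-|Hx]; auto. Qed.

Lemma pow_le1 : forall x n, 0 <= x <= 1 -> x ^ n <= 1.
Proof. induction n; intros; simpl; [lra|]. assert (x^n <= 1) by auto.
  assert (0 <= x^n) by (apply pow_le; lra). nra. Qed.

Lemma bern : forall x n, 0 <= x <= 1 -> 1 - INR n * x <= (1 - x) ^ n.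
Proof. induction n; intros; [simpl; lra|]. rewrite S_INR. cbn [pow].
  assert (H1 := IHn H). assert (0 <= 1 - x) by lra.
  assert ((1 - INR n * x) * (1 - x) <= (1-x)^n * (1-x)) by (apply Rmult_le_compat_r; lra).
  assert (0 <= INR n) by apply pos_INR.
  nra. Qed.

Lemma pow_upper : forall x n, 0 <= x <= 1 -> (1 - x) ^ n * (1 + INR n * x) <= 1.
Proof. induction n; intros; [simpl; lra|]. rewrite S_INR. cbn [pow].
  assert (H1 := IHn H). assert (0 <= (1-x)^n) by (apply pow_le; lra).
  assert (0 <= INR n) by apply pos_INR.
  assert ((1-x)*(1 + (INR n + 1) * x) <= 1 + INR n * x) by nra.
  assert ((1 - x) ^ n * ((1-x)*(1 + (INR n + 1) * x)) <= (1 - x) ^ n * (1 + INR n * x))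
    by (apply Rmult_le_compat_l; lra). nra. Qed.

Lemma qpow_upper : forall r n, 1 <= r -> (1 - / r) ^ n <= r / (r + INR n).
Proof. intros. assert (0 < / r <= 1). { split. apply Rinv_0_lt_compat; lra.
  rewrite <- Rinv_1. apply Rinv_le_contravar; lra. }
  assert (H1 := pow_upper (/r) n ltac:(lra)). assert (0 <= INR n) by apply pos_INR.
  assert (Heq : 1 + INR n * / r = (r + INR n) / r) by (field; lra).
  rewrite Heq in H1. apply (Rmult_le_reg_r ((r + INR n) / r)).
  - unfold Rdiv; apply Rmult_lt_0_compat; [lra| apply Rinv_0_lt_compat; lra].
  - replace (r / (r + INR n) * ((r + INR n) / r)) with 1 by (field; lra). lra. Qed.

Lemma qpow_lower : forall r n, 1 <= r -> 1 - INR n / r <= (1 - / r) ^ n.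
Proof. intros. assert (0 < / r <= 1). { split. apply Rinv_0_lt_compat; lra.
  rewrite <- Rinv_1. apply Rinv_le_contravar; lra. }
  unfold Rdiv. apply bern; lra. Qed.

Lemma q_range : forall r, 1 <= r -> 0 <= 1 - / r < 1.
Proof. intros. assert (0 < / r <= 1). { split. apply Rinv_0_lt_compat; lra.
  rewrite <- Rinv_1. apply Rinv_le_contravar; lra. } lra. Qed.

Lemma geom_nonneg : forall r a, 1 <= r -> 0 <= geom r a.
Proof. intros. destruct a; simpl; [lra|]. apply q_range in H as Hq.
  apply Rmult_le_pos. apply pow_le; lra. left; apply Rinv_0_lt_compat; lra. Qed.

Lemma geom_sum : forall r N, 1 <= r ->
  sumR (map (geom r) (seq 1 N)) = 1 - (1 - / r) ^ N.
Proof. intros r N Hr. induction N; [simpl; lra|].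
  rewrite seq_S, map_app, sumR_app, IHN. simpl. replace (N+0)%nat with N by lia.
  replace (S N) with (1+N)%nat by lia. simpl. field. lra. Qed.

Lemma geom_mean : forall r N, 1 <= r ->
  sumR (map (fun a => geom r a * INR a) (seq 1 N)) = r * (1 - (1 - / r) ^ N) - INR N * (1 - / r) ^ N.
Proof. intros r N Hr. induction N; [simpl; lra|].
  rewrite seq_S, map_app, sumR_app, IHN. replace (1 + N)%nat with (Datatypes.S N) by lia.
  cbn [map sumR fold_right geom pow]. rewrite !S_INR. field. lra. Qed.

Lemma trunc_sum : forall (F : nat -> R) L N, (N <= L)%nat ->
  sumR (map (fun a => F a * ind (Nat.leb a N)) (seq 1 L)) = sumR (map F (seq 1 N)).
Proof. intros. replace L with (N + (L - N))%nat by lia. rewrite seq_app, map_app, sumR_app.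
  rewrite (sum_ext _ F). rewrite (sum_ext (fun a => F a * ind (Nat.leb a N)) (fun _ => 0)).
  rewrite sum_const. lra.
  - intros x Hx. apply in_seq in Hx. destruct (Nat.leb_spec x N); [lia|]. unfold ind; lra.
  - intros x Hx. apply in_seq in Hx. destruct (Nat.leb_spec x N); [|lia]. unfold ind; lra. Qed.

Lemma geom_mean_le : forall r N, 1 <= r ->
  sumR (map (fun a => geom r a * INR a) (seq 1 N)) <= r.
Proof. intros. rewrite geom_mean by auto. apply q_range in H as Hq.
  assert (0 <= (1 - / r) ^ N) by (apply pow_le; lra).
  assert ((1 - / r) ^ N <= 1) by (apply pow_le1; lra).
  assert (0 <= INR N) by apply pos_INR. nra. Qed.

Lemma expand_cons : forall a y b k, expand (a :: y) (b :: k) = repeat a b ++ expand y k.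
Proof. reflexivity. Qed.

Lemma expand_split : forall s y k, length y = length k -> (s < length y)%nat ->
  expand y k = expand (firstn s y) (firstn s k) ++ repeat (nth s y O) (nth s k O)
     ++ expand (skipn (Datatypes.S s) y) (skipn (Datatypes.S s) k).
Proof. induction s; intros y k Hl Hs; destruct y as [|a y]; destruct k as [|b k]; simpl in *; try lia.
  - reflexivity.
  - rewrite expand_cons. rewrite (IHs y k) by lia. rewrite expand_cons, app_assoc. reflexivity. Qed.

Lemma countb_app : forall p l1 l2, countb p (l1 ++ l2) = (countb p l1 + countb p l2)%nat.
Proof. intros. unfold countb. rewrite filter_app, length_app. reflexivity. Qed.

Lemma countb_repeat : forall p a b, countb p (repeat a b) = if p a then b else O.
Proof. induction b; simpl; [destruct (p a); auto|]. unfold countb in *. simpl.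
  destruct (p a); simpl; lia. Qed.

Lemma count_expand : forall p y k, length y = length k ->
  INR (countb p (expand y k)) =
  sumR (map (fun l => ind (p (nth l y O)) * INR (nth l k O)) (seq 0 (length y))).
Proof. induction y; intros k Hl; destruct k as [|b k]; simpl in *; try lia; try reflexivity.
  rewrite expand_cons, countb_app, plus_INR, countb_repeat, IHy by lia.
  rewrite <- seq_shift, map_map. simpl. destruct (p a); unfold ind; simpl; lra. Qed.

Lemma count_nth : forall p l,
  sumR (map (fun t => ind (p (nth t l O))) (seq 0 (length l))) = INR (countb p l).
Proof. intros. unfold countb. rewrite INR_filter.
  induction l; simpl; [reflexivity|]. rewrite <- seq_shift, map_map. simpl. rewrite IHl. reflexivity. Qed.

Lemma sum_app_ge : forall (F : nat -> R) l1 l2,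
  (forall x, In x l2 -> 0 <= F x) -> sumR (map F l1) <= sumR (map F (l1 ++ l2)).
Proof. intros. rewrite map_app, sumR_app. assert (0 <= sumR (map F l2)) by (apply sum_nonneg; auto). lra. Qed.

Lemma sum_app_ge2 : forall (F : nat -> R) l1 l2,
  (forall x, In x l1 -> 0 <= F x) -> sumR (map F l2) <= sumR (map F (l1 ++ l2)).
Proof. intros. rewrite map_app, sumR_app. assert (0 <= sumR (map F l1)) by (apply sum_nonneg; auto). lra. Qed.

Lemma sum_prefix : forall (F : nat -> R) a n st, (a <= n)%nat -> (forall x, 0 <= F x) ->
  sumR (map F (seq st a)) <= sumR (map F (seq st n)).
Proof. intros. replace n with (a + (n - a))%nat by lia. rewrite seq_app. apply sum_app_ge. auto. Qed.

Section PW.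
Variables (T : nat) (Sp Mp : nat -> bool) (y k : list nat) (s : nat).

Definition fI (i l a : nat) : R :=
  if Nat.eqb l 0 then ind (Nat.leb a (4 * T)) else
  if Nat.eqb l i then INR a * ind (Nat.leb a (5 * T)) else
  if Nat.eqb l s then INR a * ind (Nat.leb a (15 * T)) else
  if andb (Nat.ltb l s) (negb (Mp (nth l y O))) then ind (Nat.eqb a 1) else 1.

Definition fIJ (i j l a : nat) : R :=
  fI i l a * (if Nat.eqb l j then INR a / (5 * INR T) else 1).

Definition KK (l : nat) : R := INR (nth l k O).

Hypotheses (HT : (1 <= T)%nat) (Hs : (1 <= s <= T)%nat) (Hly : length y = length k)
  (HsD : (s < length y)%nat)
  (Hk1 : forall l, (l < length k)%nat -> (1 <= nth l k O)%nat)
  (HM0 : Mp (nth 0 y O) = false) (HSs : Sp (nth s y O) = true).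

Lemma fI_nonneg : forall i l a, 0 <= fI i l a.
Proof. intros. unfold fI. assert (0 <= INR a) by apply pos_INR.
  repeat match goal with |- context [if ?b then _ else _] => destruct b end;
  try (pose proof (ind_01 (Nat.leb a (5*T)))); try (pose proof (ind_01 (Nat.leb a (15*T))));
  try (pose proof (ind_01 (Nat.leb a (4*T)))); try (pose proof (ind_01 (Nat.eqb a 1))); nra. Qed.

Lemma pf_fI_nonneg : forall i, 0 <= pf (fI i) k.
Proof. intros. rewrite pf_eval. apply prod_nonneg. intros; apply fI_nonneg. Qed.

Lemma pf_fI_le : forall i, (0 < i < s)%nat -> pf (fI i) k <= KK i * KK s.
Proof. intros i Hi. rewrite pf_eval.
  assert (Hi2 : (i < length k)%nat) by lia. assert (Hs2 : (s < length k)%nat) by lia.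
  rewrite <- (prod_pt (KK i) (length k) 0 i) by lia.
  rewrite <- (prod_pt (KK s) (length k) 0 s) by lia.
  rewrite <- prod_mult. apply prod_le. intros l Hl. split; [apply fI_nonneg|].
  unfold fI, KK. assert (0 <= INR (nth l k O)) by apply pos_INR.
  destruct (Nat.eqb_spec l 0).
  - subst. destruct (Nat.eqb_spec 0 i); [lia|]. destruct (Nat.eqb_spec 0 s); [lia|].
    pose proof (ind_01 (Nat.leb (nth 0 k O) (4*T))). lra.
  - destruct (Nat.eqb_spec l i).
    + subst. destruct (Nat.eqb_spec i s); [lia|].
      pose proof (ind_01 (Nat.leb (nth i k O) (5*T))). nra.
    + destruct (Nat.eqb_spec l s).
      * subst. pose proof (ind_01 (Nat.leb (nth s k O) (15*T))). nra.
      * destruct (andb _ _); [pose proof (ind_01 (Nat.eqb (nth l k O) 1))|]; lra. Qed.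

Lemma pf_fIJ : forall i j, (j < length k)%nat ->
  pf (fIJ i j) k = pf (fI i) k * (KK j / (5 * INR T)).
Proof. intros. rewrite !pf_eval. unfold fIJ. rewrite prod_mult. f_equal.
  rewrite <- (prod_pt (KK j / (5 * INR T)) (length k) 0 j) by lia.
  apply prod_ext. intros l _. destruct (Nat.eqb_spec l j); subst; reflexivity. Qed.

Lemma pf_fI_nz : forall i, (0 < i < s)%nat -> pf (fI i) k <> 0 ->
  (nth 0 k O <= 4 * T)%nat /\ (nth i k O <= 5 * T)%nat /\ (nth s k O <= 15 * T)%nat /\
  (forall l, (0 < l < s)%nat -> Mp (nth l y O) = false -> l <> i -> nth l k O = 1%nat).
Proof. intros i Hi Hnz. rewrite pf_eval in Hnz.
  assert (G : forall l, (l < length k)%nat -> fI i l (nth l k O) <> 0).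
  { intros l Hl. apply (prod_nz _ _ l Hnz). apply in_seq; lia. }
  assert (IZ : forall b, ind b <> 0 -> b = true) by (intros [|]; unfold ind; auto; lra).
  assert (IZ2 : forall x b, x * ind b <> 0 -> b = true) by (intros x [|]; unfold ind; auto; intros; lra).
  unfold fI in G. split; [|split; [|split]].
  - specialize (G 0%nat ltac:(lia)). simpl in G. apply IZ in G. apply Nat.leb_le; auto.
  - specialize (G i ltac:(lia)). destruct (Nat.eqb_spec i 0); [lia|]. rewrite Nat.eqb_refl in G.
    apply IZ2 in G. apply Nat.leb_le; auto.
  - specialize (G s ltac:(lia)). destruct (Nat.eqb_spec s 0); [lia|]. destruct (Nat.eqb_spec s i); [lia|].
    rewrite Nat.eqb_refl in G. apply IZ2 in G. apply Nat.leb_le; auto.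
  - intros l Hl HM Hli. specialize (G l ltac:(lia)). destruct (Nat.eqb_spec l 0); [lia|].
    destruct (Nat.eqb_spec l i); [lia|]. destruct (Nat.eqb_spec l s); [lia|].
    destruct (Nat.ltb_spec l s); [|lia]. rewrite HM in G. simpl in G.
    apply IZ in G. apply Nat.eqb_eq; auto. Qed.


Definition Zs (i : nat) : R :=
  sumR (map (fun j => ind (andb (Mp (nth j y O)) (negb (Nat.eqb j i))) * KK j) (seq 0 s)).

Definition e1 := expand (firstn s y) (firstn s k).

Lemma countb_true : forall l, countb (fun _ => true) l = length l.
Proof. induction l; unfold countb in *; simpl; auto. Qed.

Lemma firstn_sum : forall (p : nat -> bool),
  INR (countb p e1) = sumR (map (fun l => ind (p (nth l y O)) * KK l) (seq 0 s)).
Proof. intros. unfold e1. rewrite count_expand.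
  2:{ rewrite !length_firstn. lia. }
  rewrite length_firstn. replace (Init.Nat.min s (length y)) with s by lia.
  apply sum_ext. intros l Hl. apply in_seq in Hl. unfold KK. rewrite !nth_firstn.
  destruct (Nat.ltb_spec l s); [reflexivity|lia]. Qed.

Lemma A_sum : INR (length e1) = sumR (map KK (seq 0 s)).
Proof. rewrite <- (countb_true e1), firstn_sum. apply sum_ext. intros; unfold ind; simpl; lra. Qed.

Lemma e_split : expand y k = e1 ++ repeat (nth s y O) (nth s k O)
     ++ expand (skipn (Datatypes.S s) y) (skipn (Datatypes.S s) k).
Proof. apply expand_split; auto. Qed.

Lemma e_0 : nth 0 (expand y k) O = nth 0 y O.
Proof. rewrite (expand_split 0) by lia. simpl. rewrite app_nth1 by (rewrite repeat_length; apply Hk1; lia). rewrite nth_repeat_lt; auto.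
  apply Hk1; lia. Qed.

Lemma KK_pos : forall l, (l < length k)%nat -> 1 <= KK l.
Proof. intros. unfold KK. apply (le_INR 1). apply Hk1; auto. Qed.

Lemma KK_nn : forall l, 0 <= KK l.
Proof. intros; unfold KK; apply pos_INR. Qed.

Lemma inner_ge : forall t, (1 <= t)%nat -> (t < length e1)%nat ->
  (length e1 <= 15 * T)%nat -> (nth s k O <= 15 * T)%nat ->
  KK s <= sumR (map (fun t' => ind (Sp (nth (t + t') (expand y k) O))) (seq 1 (30 * T))).
Proof. intros t Ht1 Ht2 HA HKs.
  set (A := length e1) in *. set (b := nth s k O).
  replace (30 * T)%nat with ((A - t - 1) + (b + (30 * T - (A - t - 1) - b)))%nat by lia.
  rewrite !seq_app. eapply Rle_trans; [|apply sum_app_ge2].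
  2:{ intros; apply ind_01. }
  eapply Rle_trans; [|apply sum_app_ge]. 2:{ intros; apply ind_01. }
  rewrite (sum_ext _ (fun _ => 1)).
  - rewrite sum_const, length_seq. unfold KK. fold b. lra.
  - intros t' Ht'. apply in_seq in Ht'. rewrite e_split. fold A.
    rewrite app_nth2 by (fold e1; fold A; lia). fold e1. fold A.
    rewrite app_nth1 by (rewrite repeat_length; lia).
    rewrite nth_repeat_lt by lia. rewrite HSs. unfold ind; lra. Qed.

Lemma A_pos : (1 <= length e1)%nat.
Proof. apply INR_le. rewrite A_sum. simpl INR.
  replace s with (1 + (s - 1))%nat by lia. rewrite seq_app, map_app, sumR_app.
  assert (1 <= KK 0) by (apply KK_pos; lia).
  assert (0 <= sumR (map KK (seq (0 + 1) (s - 1)))) by (apply sum_nonneg; intros; apply KK_nn).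
  simpl. simpl in H0. lra. Qed.

Lemma LHS_ge : (length e1 <= 15 * T)%nat -> (nth s k O <= 15 * T)%nat ->
  KK s * sumR (map (fun l => ind (Mp (nth l y O)) * KK l) (seq 0 s)) <=
  sumR (map (fun t => sumR (map (fun t' => ind (andb (Mp (nth t (expand y k) O))
       (Sp (nth (t + t') (expand y k) O)))) (seq 1 (30 * T)))) (seq 1 (30 * T))).
Proof. intros HA HKs. set (A := length e1) in *. pose proof A_pos as HA1. fold A in HA1.
  rewrite (sum_ext (fun t => sumR (map (fun t' => ind (andb (Mp (nth t (expand y k) O))
       (Sp (nth (t + t') (expand y k) O)))) (seq 1 (30 * T)))) (fun t => ind (Mp (nth t (expand y k) O)) *
     sumR (map (fun t' => ind (Sp (nth (t + t') (expand y k) O))) (seq 1 (30 * T))))).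
  2:{ intros t _. rewrite <- sum_scal. apply sum_ext. intros; apply ind_and. }
  eapply Rle_trans; [|apply (sum_prefix _ (A - 1)); [lia|]].
  2:{ intros. apply Rmult_le_pos. apply ind_01. apply sum_nonneg. intros; apply ind_01. }
  eapply Rle_trans; [|apply (sum_le (fun t => ind (Mp (nth t (expand y k) O)) * KK s))].
  2:{ intros t Ht. apply in_seq in Ht. apply Rmult_le_compat_l. apply ind_01.
      apply inner_ge; fold A; lia. }
  rewrite sum_scar. rewrite (Rmult_comm (KK s)). apply Rmult_le_compat_r; [apply KK_nn|].
  rewrite <- firstn_sum. rewrite <- count_nth. fold A.
  replace A with (1 + (A - 1))%nat at 1 by lia. rewrite seq_app. simpl.
  rewrite (sum_ext (fun t => ind (Mp (nth t e1 O))) (fun t => ind (Mp (nth t (expand y k) O)))).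
  - assert (nth 0 e1 O = nth 0 y O).
    { rewrite <- e_0. rewrite e_split. rewrite app_nth1; auto. }
    rewrite H, HM0. unfold ind at 1. lra.
  - intros t Ht. apply in_seq in Ht. rewrite e_split. rewrite app_nth1; auto. fold A. lia. Qed.


Lemma Zs_nn : forall i, 0 <= Zs i.
Proof. intros. apply sum_nonneg. intros. apply Rmult_le_pos; [apply ind_01|apply KK_nn]. Qed.

Lemma term_rewrite : forall i, (i < s)%nat ->
  ind (Mp (nth i y O)) * (pf (fI i) k - sumR (map (fun j => ind (andb (Mp (nth j y O)) (negb (Nat.eqb j i))) * pf (fIJ i j) k) (seq 0 s)))
  = ind (Mp (nth i y O)) * pf (fI i) k * (1 - Zs i / (5 * INR T)).
Proof. intros. unfold Zs.
  rewrite (sum_ext _ (fun j => pf (fI i) k / (5 * INR T) * (ind (andb (Mp (nth j y O)) (negb (Nat.eqb j i))) * KK j))).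
  2:{ intros j Hj. apply in_seq in Hj. rewrite pf_fIJ by lia. unfold Rdiv. ring. }
  rewrite sum_scal. unfold Rdiv. ring. Qed.

Lemma A_bound : forall i, (0 < i < s)%nat -> Mp (nth i y O) = true -> pf (fI i) k <> 0 ->
  INR (length e1) <= 4 * INR T + 5 * INR T + Zs i + INR T.
Proof. intros i Hi HMi Hnz. destruct (pf_fI_nz i Hi Hnz) as [H0 [Hi5 [_ HN]]].
  rewrite A_sum.
  eapply Rle_trans.
  - apply (sum_le _ (fun l => ind (Nat.eqb l 0) * KK l + ind (Nat.eqb l i) * KK l +
       ind (andb (Mp (nth l y O)) (negb (Nat.eqb l i))) * KK l + 1)).
    intros l Hl. apply in_seq in Hl.
    pose proof (KK_nn l).
    pose proof (ind_01 (Nat.eqb l 0)). pose proof (ind_01 (Nat.eqb l i)).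
    pose proof (ind_01 (andb (Mp (nth l y O)) (negb (Nat.eqb l i)))).
    destruct (Nat.eqb_spec l 0). { subst. unfold ind; simpl. repeat match goal with |- context[if ?b then _ else _] => destruct b end; nra. }
    destruct (Nat.eqb_spec l i). { subst. unfold ind; simpl. repeat match goal with |- context[if ?b then _ else _] => destruct b end; nra. }
    destruct (Mp (nth l y O)) eqn:E. { simpl. unfold ind. destruct (Nat.eqb_spec l i); [lia|]. simpl. repeat match goal with |- context[if ?b then _ else _] => destruct b end; nra. }
    unfold KK at 1. rewrite (HN l ltac:(lia) E ltac:(auto)). simpl. unfold ind. simpl. lra.
  - rewrite !sum_plus. rewrite sum_point by lia. rewrite sum_point by lia. fold (Zs i).
    rewrite sum_const, length_seq. unfold KK at 1 2.
    apply le_INR in H0. apply le_INR in Hi5. rewrite mult_INR in H0, Hi5. simpl in H0, Hi5.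
    assert (Hs2 : (s <= T)%nat) by lia. apply le_INR in Hs2. lra. Qed.

Hypothesis HT2 : (2 <= T)%nat.

Lemma PW : sumR (map (fun i => ind (Mp (nth i y O)) * (pf (fI i) k - sumR (map (fun j => ind (andb (Mp (nth j y O)) (negb (Nat.eqb j i))) * pf (fIJ i j) k) (seq 0 s)))) (seq 0 s))
 <= sumR (map (fun t => sumR (map (fun t' => ind (andb (Mp (nth t (expand y k) O)) (Sp (nth (t + t') (expand y k) O)))) (seq 1 (30 * T)))) (seq 1 (30 * T))).
Proof.
  rewrite (sum_ext _ (fun i => ind (Mp (nth i y O)) * pf (fI i) k * (1 - Zs i / (5 * INR T)))).
  2:{ intros i Hi. apply in_seq in Hi. apply term_rewrite. lia. }
  assert (HTr : 2 <= INR T) by (apply (le_INR 2); auto).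
  destruct (Nat.leb_spec (length e1) (15 * T)) as [HA|HA];
  [destruct (Nat.leb_spec (nth s k O) (15 * T)) as [HK|HK]|].
  - eapply Rle_trans; [|apply LHS_ge; auto].
    rewrite <- sum_scal. apply sum_le. intros i Hi. apply in_seq in Hi.
    pose proof (ind_01 (Mp (nth i y O))). pose proof (pf_fI_nonneg i). pose proof (Zs_nn i).
    destruct (Mp (nth i y O)) eqn:E.
    + assert (i <> 0%nat) by (intro; subst; congruence).
      pose proof (pf_fI_le i ltac:(lia)).
      assert (0 <= Zs i / (5 * INR T)) by (unfold Rdiv; apply Rmult_le_pos; [lra|left; apply Rinv_0_lt_compat; lra]).
      unfold ind. pose proof (KK_nn i). pose proof (KK_nn s). nra.
    + unfold ind. pose proof (KK_nn i). pose proof (KK_nn s). nra.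
  - eapply Rle_trans with 0; [|apply sum_nonneg; intros; apply sum_nonneg; intros; apply ind_01].
    rewrite <- (Rmult_0_r (INR (length (seq 0 s)))). rewrite <- sum_const.
    apply sum_le. intros i Hi. apply in_seq in Hi.
    pose proof (pf_fI_nonneg i).
    destruct (Mp (nth i y O)) eqn:E; [|unfold ind; lra].
    assert (i <> 0%nat) by (intro; subst; congruence).
    destruct (Req_dec (pf (fI i) k) 0) as [Z|Z]; [rewrite Z; lra|].
    destruct (pf_fI_nz i ltac:(lia) Z) as [_ [_ [HKs _]]]. lia.
  - eapply Rle_trans with 0; [|apply sum_nonneg; intros; apply sum_nonneg; intros; apply ind_01].
    rewrite <- (Rmult_0_r (INR (length (seq 0 s)))). rewrite <- sum_const.
    apply sum_le. intros i Hi. apply in_seq in Hi.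
    pose proof (pf_fI_nonneg i).
    destruct (Mp (nth i y O)) eqn:E; [|unfold ind; lra].
    assert (i <> 0%nat) by (intro; subst; congruence).
    destruct (Req_dec (pf (fI i) k) 0) as [Z|Z]; [rewrite Z; lra|].
    pose proof (A_bound i ltac:(lia) E Z).
    apply lt_INR in HA. rewrite mult_INR in HA. simpl in HA.
    assert (Zs i / (5 * INR T) > 1).
    { apply Rlt_gt. apply (Rmult_lt_reg_r (5 * INR T)); [lra|]. unfold Rdiv.
      rewrite Rmult_assoc, Rinv_l by lra. lra. }
    unfold ind. nra. Qed.

End PW.

Lemma rep_nonneg : forall rS rM Sp Mp x a, 1 <= rS -> 1 <= rM -> 0 <= rep_w rS rM Sp Mp x a.
Proof. intros. unfold rep_w. destruct (Sp x); [apply geom_nonneg; auto|].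
  destruct (Mp x); [apply geom_nonneg; auto|]. apply ind_01. Qed.

Lemma point1 : forall L (F : nat -> R), (1 <= L)%nat ->
  sumR (map (fun a => ind (Nat.eqb a 1) * F a) (seq 1 L)) = F 1%nat.
Proof. intros. apply sum_point. lia. Qed.

Lemma rep_sum_bounds : forall rS rM Sp Mp x L, 1 <= rS -> 1 <= rM -> (1 <= L)%nat ->
  let d := Rmax rS rM / INR L in
  1 - d <= sumR (map (rep_w rS rM Sp Mp x) (seq 1 L)) <= 1.
Proof. intros rS rM Sp Mp x L H0 H1 HL d.
  assert (HLr : 1 <= INR L) by (apply (le_INR 1); auto).
  assert (Hq : forall r, 1 <= r -> r <= Rmax rS rM -> 1 - d <= 1 - (1 - / r) ^ L <= 1).
  { intros r Hr Hrm. split.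
    - pose proof (qpow_upper r L Hr). unfold d.
      assert (r / (r + INR L) <= Rmax rS rM / INR L).
      { unfold Rdiv. apply Rmult_le_compat. lra. left; apply Rinv_0_lt_compat; lra. lra.
        apply Rinv_le_contravar; lra. }
      lra.
    - apply q_range in Hr. pose proof (pow_le (1 - / r) L ltac:(lra)). lra. }
  unfold rep_w. destruct (Sp x).
  - rewrite geom_sum by auto. apply Hq; auto. apply Rmax_l.
  - destruct (Mp x).
    + rewrite geom_sum by auto. apply Hq; auto. apply Rmax_r.
    + rewrite (sum_ext _ (fun a => ind (Nat.eqb a 1) * 1)) by (intros; ring).
      rewrite point1 by auto. assert (0 <= d).
      { unfold d. unfold Rdiv. apply Rmult_le_pos. pose proof (Rmax_l rS rM). lra.
        left; apply Rinv_0_lt_compat; lra. } lra. Qed.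

Section Exp.
Variables (T : nat) (Sp Mp : nat -> bool) (y : list nat) (s L : nat) (r0 r1 : R).
Hypotheses (HT : (2 <= T)%nat) (Hs : (1 <= s <= T)%nat) (HsD : (s < length y)%nat)
  (HL : (15 * T <= L)%nat)
  (Hr0 : 1 <= r0) (Hr1 : 1 <= r1)
  (HS0 : Sp (nth 0 y O) = true) (HM0 : Mp (nth 0 y O) = false) (HSs : Sp (nth s y O) = true)
  (HSl : forall l, (1 <= l < s)%nat -> Sp (nth l y O) = false).

Let EF := Ef r0 r1 Sp Mp y L.
Let d := Rmax r0 r1 / INR L.

Definition G0 := sumR (map (fun a => geom r0 a * ind (Nat.leb a (4 * T))) (seq 1 L)).
Definition GM := sumR (map (fun a => geom r1 a * (INR a * ind (Nat.leb a (5 * T)))) (seq 1 L)).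
Definition GS := sumR (map (fun a => geom r0 a * (INR a * ind (Nat.leb a (15 * T)))) (seq 1 L)).

Lemma L1 : (1 <= L)%nat. Proof. lia. Qed.

Lemma Ef_01 : forall f l, (forall a, 0 <= f l a <= 1) -> 0 <= EF f l <= 1.
Proof. intros f l Hf. unfold EF, Ef.
  pose proof (rep_sum_bounds r0 r1 Sp Mp (nth l y O) L Hr0 Hr1 L1) as [_ H].
  split.
  - apply sum_nonneg. intros a _. apply Rmult_le_pos. apply rep_nonneg; auto. apply Hf.
  - eapply Rle_trans; [|apply H]. apply sum_le. intros a _.
    pose proof (rep_nonneg r0 r1 Sp Mp (nth l y O) a Hr0 Hr1). specialize (Hf a). nra. Qed.

Lemma Ef_1 : forall f l, (forall a, f l a = 1) -> 1 - d <= EF f l.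
Proof. intros f l Hf. unfold EF, Ef.
  pose proof (rep_sum_bounds r0 r1 Sp Mp (nth l y O) L Hr0 Hr1 L1) as [H _].
  rewrite (sum_ext _ (rep_w r0 r1 Sp Mp (nth l y O))). apply H.
  intros; rewrite Hf; ring. Qed.

Lemma Ef_ind1 : forall f l, (forall a, f l a = ind (Nat.eqb a 1)) ->
  Sp (nth l y O) = false -> Mp (nth l y O) = false -> EF f l = 1.
Proof. intros f l Hf H1 H2. unfold EF, Ef.
  rewrite (sum_ext _ (fun a => ind (Nat.eqb a 1) * rep_w r0 r1 Sp Mp (nth l y O) a)).
  - rewrite point1 by apply L1. unfold rep_w. rewrite H1, H2. reflexivity.
  - intros; rewrite Hf; ring. Qed.

Variable i : nat.
Hypotheses (Hi : (0 < i < s)%nat) (HMi : Mp (nth i y O) = true).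

Lemma fI_0 : forall a, fI T Mp y s i 0 a = ind (Nat.leb a (4 * T)).
Proof. intros. reflexivity. Qed.
Lemma fI_i : forall a, fI T Mp y s i i a = INR a * ind (Nat.leb a (5 * T)).
Proof. intros. unfold fI. destruct (Nat.eqb_spec i 0); [lia|]. rewrite Nat.eqb_refl. reflexivity. Qed.
Lemma fI_s : forall a, fI T Mp y s i s a = INR a * ind (Nat.leb a (15 * T)).
Proof. intros. unfold fI. destruct (Nat.eqb_spec s 0); [lia|]. destruct (Nat.eqb_spec s i); [lia|].
  rewrite Nat.eqb_refl. reflexivity. Qed.
Lemma fI_o : forall l a, l <> 0%nat -> l <> i -> l <> s ->
  fI T Mp y s i l a = if andb (Nat.ltb l s) (negb (Mp (nth l y O))) then ind (Nat.eqb a 1) else 1.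
Proof. intros. unfold fI. destruct (Nat.eqb_spec l 0); [lia|]. destruct (Nat.eqb_spec l i); [lia|].
  destruct (Nat.eqb_spec l s); [lia|]. reflexivity. Qed.

Lemma EF_0 : EF (fI T Mp y s i) 0 = G0.
Proof. unfold EF, Ef, G0, rep_w. rewrite HS0. apply sum_ext. intros; rewrite fI_0; reflexivity. Qed.
Lemma EF_i : EF (fI T Mp y s i) i = GM.
Proof. unfold EF, Ef, GM, rep_w. rewrite HSl by lia. rewrite HMi. apply sum_ext. intros; rewrite fI_i; reflexivity. Qed.
Lemma EF_s : EF (fI T Mp y s i) s = GS.
Proof. unfold EF, Ef, GS, rep_w. rewrite HSs. apply sum_ext. intros; rewrite fI_s; reflexivity. Qed.

Lemma G_nonneg : 0 <= G0 /\ 0 <= GM /\ 0 <= GS.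
Proof. unfold G0, GM, GS. repeat split; apply sum_nonneg; intros a _;
  repeat apply Rmult_le_pos; try apply geom_nonneg; auto; try apply pos_INR; apply ind_01. Qed.

Lemma fI_01_o : forall l a, l <> 0%nat -> l <> i -> l <> s -> 0 <= fI T Mp y s i l a <= 1.
Proof. intros. rewrite fI_o by auto. destruct (andb _ _); [apply ind_01|lra]. Qed.

Lemma EF_o_lb : forall l, l <> 0%nat -> l <> i -> l <> s -> 1 - d <= EF (fI T Mp y s i) l.
Proof. intros l H0 H1 H2. destruct (andb (Nat.ltb l s) (negb (Mp (nth l y O)))) eqn:E.
  - apply andb_prop in E as [E1 E2]. assert (E1' := proj1 (Nat.ltb_lt _ _) E1). apply Bool.negb_true_iff in E2.
    rewrite Ef_ind1; auto.
    + assert (0 <= d). { unfold d, Rdiv. apply Rmult_le_pos. pose proof (Rmax_l r0 r1); lra.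
        left. apply Rinv_0_lt_compat. apply (lt_INR 0). lia. } lra.
    + intros; rewrite fI_o by auto. rewrite E1. simpl. rewrite E2. reflexivity.
    + apply HSl. lia.
  - apply Ef_1. intros; rewrite fI_o by auto. rewrite E. reflexivity. Qed.


Lemma d_range : 0 <= d <= 1 -> True. Proof. auto. Qed.

Lemma prod_fI_lb : 0 <= d <= 1 ->
  (1 - d) ^ length y * (G0 * GM * GS) <= prodR (map (EF (fI T Mp y s i)) (seq 0 (length y))).
Proof. intros Hd. pose proof G_nonneg as [Ga [Gb Gc]].
  set (D := length y).
  assert (E : (1 - d) ^ D * (G0 * GM * GS) = prodR (map (fun l => (1 - d) *
     ((if Nat.eqb l 0 then G0 else 1) * (if Nat.eqb l i then GM else 1) * (if Nat.eqb l s then GS else 1))) (seq 0 D))).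
  { rewrite !prod_mult, prod_const, length_seq. rewrite !prod_pt by lia. reflexivity. }
  rewrite E. apply prod_le. intros l Hl. apply in_seq in Hl.
  destruct (Nat.eqb_spec l 0).
  - subst. destruct (Nat.eqb_spec 0 i); [lia|]. destruct (Nat.eqb_spec 0 s); [lia|].
    rewrite EF_0. split; nra.
  - destruct (Nat.eqb_spec l i).
    + subst. destruct (Nat.eqb_spec i s); [lia|]. rewrite EF_i. split; nra.
    + destruct (Nat.eqb_spec l s).
      * subst. rewrite EF_s. split; nra.
      * pose proof (EF_o_lb l n n0 n1). split; nra. Qed.

Variable j : nat.
Hypotheses (Hj : (j < s)%nat) (HMj : Mp (nth j y O) = true) (Hji : j <> i).

Lemma prod_fIJ_ub :
  prodR (map (EF (fIJ T Mp y s i j)) (seq 0 (length y))) <= G0 * GM * GS * (r1 / (5 * INR T)).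
Proof. pose proof G_nonneg as [Ga [Gb Gc]].
  assert (Hj0 : j <> 0%nat) by (intro; subst; congruence).
  assert (HTr : 2 <= INR T) by (apply (le_INR 2); auto).
  set (D := length y).
  assert (E : G0 * GM * GS * (r1 / (5 * INR T)) = prodR (map (fun l =>
     ((if Nat.eqb l 0 then G0 else 1) * (if Nat.eqb l i then GM else 1) * (if Nat.eqb l s then GS else 1)
      * (if Nat.eqb l j then r1 / (5 * INR T) else 1))) (seq 0 D))).
  { rewrite !prod_mult. rewrite !prod_pt by lia. reflexivity. }
  rewrite E. apply prod_le. intros l Hl. apply in_seq in Hl.
  assert (EFJ : forall l, l <> j -> EF (fIJ T Mp y s i j) l = EF (fI T Mp y s i) l).
  { intros l' Hl'. unfold EF, Ef, fIJ. apply sum_ext. intros a _.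
    destruct (Nat.eqb_spec l' j); [lia|]. ring. }
  assert (NN : 0 <= EF (fIJ T Mp y s i j) l).
  { unfold EF, Ef. apply sum_nonneg. intros a _. apply Rmult_le_pos. apply rep_nonneg; auto.
    unfold fIJ. apply Rmult_le_pos. apply fI_nonneg.
    destruct (Nat.eqb l j); [|lra]. unfold Rdiv. apply Rmult_le_pos. apply pos_INR.
    left; apply Rinv_0_lt_compat; lra. }
  split; auto.
  destruct (Nat.eqb_spec l 0).
  - subst. destruct (Nat.eqb_spec 0 i); [lia|]. destruct (Nat.eqb_spec 0 s); [lia|].
    destruct (Nat.eqb_spec 0 j); [lia|]. rewrite EFJ by lia. rewrite EF_0. lra.
  - destruct (Nat.eqb_spec l i).
    + subst. destruct (Nat.eqb_spec i s); [lia|]. destruct (Nat.eqb_spec i j); [lia|].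
      rewrite EFJ by lia. rewrite EF_i. lra.
    + destruct (Nat.eqb_spec l s).
      * subst. destruct (Nat.eqb_spec s j); [lia|]. rewrite EFJ by lia. rewrite EF_s. lra.
      * destruct (Nat.eqb_spec l j).
        -- subst. unfold EF, Ef.
           rewrite (sum_ext _ (fun a => (geom r1 a * INR a) * / (5 * INR T))).
           2:{ intros a _. unfold rep_w. rewrite HSl by lia. rewrite HMj. unfold fIJ.
               rewrite fI_o by lia. rewrite HMj. rewrite Nat.eqb_refl. simpl.
               destruct (j <? s); simpl; unfold Rdiv; ring. }
           rewrite sum_scar. pose proof (geom_mean_le r1 L Hr1).
           assert (0 < / (5 * INR T)) by (apply Rinv_0_lt_compat; lra). nra.
        -- rewrite EFJ by auto. pose proof (Ef_01 (fI T Mp y s i) l).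
           assert (0 <= EF (fI T Mp y s i) l <= 1) by (apply H; intros; apply fI_01_o; auto).
           lra. Qed.
End Exp.

Lemma geom_lb : forall r a0 N, 1 <= r -> (1 <= a0 <= N)%nat ->
  INR a0 * ((1 - / r) ^ (a0 - 1) - (1 - / r) ^ N) <= sumR (map (fun a => geom r a * INR a) (seq 1 N)).
Proof. intros r a0 N Hr Ha.
  replace N with ((a0 - 1) + (N - (a0 - 1)))%nat at 2 by lia.
  rewrite seq_app, map_app, sumR_app.
  assert (0 <= sumR (map (fun a => geom r a * INR a) (seq 1 (a0 - 1)))).
  { apply sum_nonneg. intros. apply Rmult_le_pos; [apply geom_nonneg; auto|apply pos_INR]. }
  assert (E : sumR (map (geom r) (seq (1 + (a0 - 1)) (N - (a0 - 1)))) = (1 - / r) ^ (a0 - 1) - (1 - / r) ^ N).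
  { pose proof (geom_sum r N Hr). pose proof (geom_sum r (a0 - 1) Hr).
    replace N with ((a0 - 1) + (N - (a0 - 1)))%nat in H0 at 1 by lia.
    rewrite seq_app, map_app, sumR_app in H0. lra. }
  rewrite <- E. rewrite <- sum_scal.
  assert (sumR (map (fun x => INR a0 * geom r x) (seq (1 + (a0 - 1)) (N - (a0 - 1)))) <=
          sumR (map (fun a => geom r a * INR a) (seq (1 + (a0 - 1)) (N - (a0 - 1))))).
  { apply sum_le. intros x Hx. apply in_seq in Hx. pose proof (geom_nonneg r x Hr).
    assert (INR a0 <= INR x) by (apply le_INR; lia). nra. }
  lra. Qed.

Lemma G0_lb : forall T L, (2 <= T)%nat -> (4 * T <= L)%nat -> 8 / 9 <= G0 T L (INR T / 2).
Proof. intros T L HT HL. unfold G0. rewrite trunc_sum by auto.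
  assert (HTr : 2 <= INR T) by (apply (le_INR 2); auto).
  rewrite geom_sum by lra. pose proof (qpow_upper (INR T / 2) (4 * T) ltac:(lra)).
  rewrite mult_INR in H. simpl INR in H.
  assert (INR T / 2 / (INR T / 2 + (1+1+1+1) * INR T) = 1 / 9) by (field; lra). lra. Qed.

Lemma GS_lb : forall T L, (2 <= T)%nat -> (15 * T <= L)%nat -> INR T / 9 <= GS T L (INR T / 2).
Proof. intros T L HT HL. unfold GS.
  assert (HTr : 2 <= INR T) by (apply (le_INR 2); auto).
  rewrite (sum_ext _ (fun a => (geom (INR T / 2) a * INR a) * ind (Nat.leb a (15 * T)))) by (intros; ring).
  rewrite trunc_sum by auto.
  set (a0 := (T / 4 + 1)%nat).
  assert (Ha0 : (1 <= a0 <= 15 * T)%nat).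
  { unfold a0. split; [lia|]. pose proof (Nat.Div0.div_le_upper_bound T 4 T). lia. }
  eapply Rle_trans; [|apply (geom_lb _ a0); auto; lra].
  assert (Hdm : (T = 4 * (T / 4) + T mod 4)%nat) by (apply Nat.div_mod; lia).
  assert (Hm : (T mod 4 < 4)%nat) by (apply Nat.mod_upper_bound; lia).
  assert (HdmR : INR T = 4 * INR (T / 4) + INR (T mod 4)).
  { rewrite Hdm at 1. rewrite plus_INR, mult_INR. simpl INR. ring. }
  assert (A1 : INR T / 4 <= INR a0).
  { unfold a0. rewrite plus_INR. apply lt_INR in Hm. simpl INR in *. lra. }
  assert (A2 : INR (a0 - 1) <= INR T / 4).
  { unfold a0. replace (T / 4 + 1 - 1)%nat with (T / 4)%nat by lia.
    pose proof (pos_INR (T mod 4)). lra. }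
  pose proof (qpow_lower (INR T / 2) (a0 - 1) ltac:(lra)).
  pose proof (qpow_upper (INR T / 2) (15 * T) ltac:(lra)).
  rewrite mult_INR in H0. simpl INR in H0.
  assert (INR T / 2 / (INR T / 2 + (1+1+1+1+1+1+1+1+1+1+1+1+1+1+1) * INR T) = 1 / 31) by (field; lra).
  assert (INR (a0 - 1) / (INR T / 2) <= 1 / 2).
  { apply (Rmult_le_reg_r (INR T / 2)); [lra|]. unfold Rdiv at 1. rewrite Rmult_assoc, Rinv_l by lra. lra. }
  assert (1/2 - 1/31 <= (1 - / (INR T / 2)) ^ (a0 - 1) - (1 - / (INR T / 2)) ^ (15 * T)) by lra.
  assert (INR T / 4 * (1/2 - 1/31) <= INR a0 * ((1 - / (INR T / 2)) ^ (a0 - 1) - (1 - / (INR T / 2)) ^ (15 * T))).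
  { apply Rmult_le_compat; lra. }
  lra. Qed.

Lemma GM_lb : forall T L R1, (2 <= T)%nat -> (15 * T <= L)%nat -> (1 <= R1 <= 2 * T)%nat ->
  3 * INR R1 / 28 <= GM T L (INR R1).
Proof. intros T L R1 HT HL HR. unfold GM.
  assert (HTr : 2 <= INR T) by (apply (le_INR 2); auto).
  assert (HRr : 1 <= INR R1) by (apply (le_INR 1); lia).
  assert (HRr2 : INR R1 <= 2 * INR T) by (assert (H' : (R1 <= 2*T)%nat) by lia; apply le_INR in H'; rewrite mult_INR in H'; simpl in H'; lra).
  rewrite (sum_ext _ (fun a => (geom (INR R1) a * INR a) * ind (Nat.leb a (5 * T)))) by (intros; ring).
  rewrite trunc_sum by lia.
  set (a0 := (R1 / 2 + 1)%nat).
  assert (Ha0 : (1 <= a0 <= 5 * T)%nat).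
  { unfold a0. split; [lia|]. pose proof (Nat.Div0.div_le_upper_bound R1 2 T). lia. }
  eapply Rle_trans; [|apply (geom_lb _ a0); auto].
  assert (Hdm : (R1 = 2 * (R1 / 2) + R1 mod 2)%nat) by (apply Nat.div_mod; lia).
  assert (Hm : (R1 mod 2 < 2)%nat) by (apply Nat.mod_upper_bound; lia).
  assert (HdmR : INR R1 = 2 * INR (R1 / 2) + INR (R1 mod 2)).
  { rewrite Hdm at 1. rewrite plus_INR, mult_INR. simpl INR. ring. }
  assert (A1 : INR R1 / 2 <= INR a0).
  { unfold a0. rewrite plus_INR. apply lt_INR in Hm. simpl INR in *. lra. }
  assert (A2 : INR (a0 - 1) <= INR R1 / 2).
  { unfold a0. replace (R1 / 2 + 1 - 1)%nat with (R1 / 2)%nat by lia.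
    pose proof (pos_INR (R1 mod 2)). lra. }
  pose proof (qpow_lower (INR R1) (a0 - 1) ltac:(lra)).
  pose proof (qpow_upper (INR R1) (5 * T) ltac:(lra)).
  rewrite mult_INR in H0. simpl INR in H0.
  assert (INR R1 / (INR R1 + (1+1+1+1+1) * INR T) <= 2 / 7).
  { apply (Rmult_le_reg_r (INR R1 + (1+1+1+1+1) * INR T)); [lra|]. unfold Rdiv at 1.
    rewrite Rmult_assoc, Rinv_l by lra. lra. }
  assert (INR (a0 - 1) / INR R1 <= 1 / 2).
  { apply (Rmult_le_reg_r (INR R1)); [lra|]. unfold Rdiv at 1. rewrite Rmult_assoc, Rinv_l by lra. lra. }
  assert (1/2 - 2/7 <= (1 - / INR R1) ^ (a0 - 1) - (1 - / INR R1) ^ (5 * T)) by lra.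
  assert (INR R1 / 2 * (1/2 - 2/7) <= INR a0 * ((1 - / INR R1) ^ (a0 - 1) - (1 - / INR R1) ^ (5 * T))).
  { apply Rmult_le_compat; lra. }
  lra. Qed.

Lemma lin_exp : forall (V : list (list nat)) (I J : list nat) (c : list nat -> R) (a : nat -> R)
  (b : nat -> nat -> R) (P : nat -> list nat -> R) (Q : nat -> nat -> list nat -> R),
  sumR (map (fun k => c k * sumR (map (fun i => a i * (P i k - sumR (map (fun j => b i j * Q i j k) J))) I)) V)
  = sumR (map (fun i => a i * (sumR (map (fun k => c k * P i k) V) -
        sumR (map (fun j => b i j * sumR (map (fun k => c k * Q i j k) V)) J))) I).
Proof. intros.
  rewrite (sum_ext _ (fun k => sumR (map (fun i => a i * (c k * P i k) -
      sumR (map (fun j => a i * b i j * (c k * Q i j k)) J)) I))).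
  2:{ intros k _. rewrite <- (sum_scal (c k) (fun i => a i * (P i k - sumR (map (fun j => b i j * Q i j k) J)))).
      apply sum_ext. intros i _.
      rewrite (sum_ext (fun j => a i * b i j * (c k * Q i j k)) (fun j => (a i * c k) * (b i j * Q i j k))) by (intros; ring).
      rewrite (sum_scal (a i * c k) (fun j => b i j * Q i j k)). ring. }
  rewrite sum_swap. apply sum_ext. intros i _.
  rewrite sum_minus. rewrite (sum_scal (a i) (fun k => c k * P i k)).
  rewrite sum_swap.
  rewrite (sum_ext (fun j => sumR (map (fun k => a i * b i j * (c k * Q i j k)) V))
     (fun j => a i * (b i j * sumR (map (fun k => c k * Q i j k) V)))).
  2:{ intros j _. rewrite (sum_scal (a i * b i j) (fun k => c k * Q i j k)). ring. }
  rewrite (sum_scal (a i) (fun j => b i j * sumR (map (fun k => c k * Q i j k) V))). ring. Qed.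

Section Core.
Variables (T : nat) (Sp Mp : nat -> bool) (y : list nat) (s R1 : nat).
Let D := length y.
Let L := (100 * T * D)%nat.
Let r0 := INR T / 2.
Let r1 := INR R1.
Let mN := length (filter (fun l => Mp (nth l y O)) (seq 0 s)).
Hypotheses (HT : (2 <= T)%nat) (Hs : (1 <= s <= T)%nat) (HsD : (s < D)%nat)
  (HS0 : Sp (nth 0 y O) = true) (HM0 : Mp (nth 0 y O) = false) (HSs : Sp (nth s y O) = true)
  (HSl : forall l, (1 <= l < s)%nat -> Sp (nth l y O) = false)
  (HR1 : (1 <= R1 <= 2 * T)%nat) (HmR : (mN * R1 <= 2 * T)%nat) (HmR2 : (T <= mN * R1)%nat).

Lemma HTr : 2 <= INR T. Proof. apply (le_INR 2); auto. Qed.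
Lemma Hr0 : 1 <= r0. Proof. pose proof HTr. unfold r0. lra. Qed.
Lemma Hr1 : 1 <= r1. Proof. unfold r1. apply (le_INR 1). lia. Qed.
Lemma HL15 : (15 * T <= L)%nat. Proof. unfold L. nia. Qed.

Lemma m_eq : sumR (map (fun j => ind (Mp (nth j y O))) (seq 0 s)) = INR mN.
Proof. unfold mN. rewrite INR_filter. reflexivity. Qed.

Lemma d_bound : 0 <= Rmax r0 r1 / INR L /\ INR D * (Rmax r0 r1 / INR L) <= 1 / 50.
Proof. pose proof HTr. pose proof Hr0. pose proof Hr1.
  assert (Hm : Rmax r0 r1 <= 2 * INR T).
  { unfold Rmax. destruct (Rle_dec r0 r1). unfold r1. assert (H' : (R1 <= 2*T)%nat) by lia.
    apply le_INR in H'; rewrite mult_INR in H'; simpl in H'; lra. unfold r0; lra. }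
  assert (HD : 1 <= INR D) by (apply (le_INR 1); lia).
  assert (HLr : INR L = 100 * INR T * INR D) by (unfold L; rewrite !mult_INR; simpl; ring).
  assert (0 < INR L) by (rewrite HLr; nra).
  assert (0 <= Rmax r0 r1) by (pose proof (Rmax_l r0 r1); lra).
  split. unfold Rdiv; apply Rmult_le_pos; [lra|left; apply Rinv_0_lt_compat; lra].
  unfold Rdiv. rewrite HLr.
  replace (INR D * (Rmax r0 r1 * / (100 * INR T * INR D))) with (Rmax r0 r1 / (100 * INR T)) by (field; lra).
  apply (Rmult_le_reg_r (100 * INR T)); [nra|]. unfold Rdiv. rewrite Rmult_assoc, Rinv_l by lra. lra. Qed.

Definition RHSf (k : list nat) : R :=
  sumR (map (fun i => ind (Mp (nth i y O)) * (pf (fI T Mp y s i) k -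
     sumR (map (fun j => ind (andb (Mp (nth j y O)) (negb (Nat.eqb j i))) * pf (fIJ T Mp y s i j) k) (seq 0 s)))) (seq 0 s)).

Lemma core_exp : INR T ^ 2 / 1000 <=
  sum_tuples (seq 1 L) D (fun k => cnt_w r0 r1 Sp Mp y k * RHSf k).
Proof.
  pose proof HTr as HTr'. pose proof Hr0 as Hr0'. pose proof Hr1 as Hr1'. pose proof HL15 as HL'.
  assert (PM := fun f => prod_measure r0 r1 Sp Mp L D y f eq_refl). unfold sum_tuples in PM.
  unfold sum_tuples, RHSf. rewrite lin_exp.
  set (X := G0 T L r0 * GM T L r1 * GS T L r0).
  set (d := Rmax r0 r1 / INR L).
  pose proof d_bound as [Hd0 HdD]. fold d in Hd0, HdD.
  assert (Hd1 : d <= 1). { assert (1 <= INR D) by (apply (le_INR 1); lia). nra. }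
  pose proof (G_nonneg T L r0 r1 Hr0' Hr1') as [Ga [Gb Gc]].
  assert (HX : 0 <= X) by (unfold X; repeat apply Rmult_le_pos; auto).
  assert (Hpow : 1 - 1/50 <= (1 - d) ^ D).
  { pose proof (bern d D ltac:(lra)). lra. }
  eapply Rle_trans; [|apply (sum_le (fun i => ind (Mp (nth i y O)) * (X * ((1 - d) ^ D - INR mN * r1 / (5 * INR T)))))].
  - rewrite sum_scar. rewrite m_eq.
    assert (Hmr : INR mN * r1 <= 2 * INR T /\ INR T <= INR mN * r1).
    { unfold r1. rewrite <- mult_INR. split. apply le_INR in HmR. rewrite (mult_INR 2 T) in HmR. simpl in HmR. lra.
      apply le_INR in HmR2. auto. }
    assert (INR mN * r1 / (5 * INR T) <= 2 / 5).
    { apply (Rmult_le_reg_r (5 * INR T)); [lra|]. unfold Rdiv. rewrite Rmult_assoc, Rinv_l by lra. lra. }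
    assert (G0b := G0_lb T L HT ltac:(lia)). assert (GSb := GS_lb T L HT ltac:(lia)).
    assert (GMb := GM_lb T L R1 HT ltac:(lia) HR1). fold r0 r1 in G0b, GSb, GMb.
    assert (HmGM : 3 * INR T / 28 <= INR mN * GM T L r1).
    { assert (0 <= INR mN) by apply pos_INR. nra. }
    assert (INR mN * X >= 8/9 * (3 * INR T / 28) * (INR T / 9)).
    { unfold X. replace (INR mN * (G0 T L r0 * GM T L r1 * GS T L r0)) with
        (G0 T L r0 * (INR mN * GM T L r1) * GS T L r0) by ring.
      apply Rle_ge. apply Rmult_le_compat; [nra|lra| |lra]. apply Rmult_le_compat; lra. }
    assert (0 <= INR mN) by apply pos_INR.
    replace (INR mN * (X * ((1 - d) ^ D - INR mN * r1 / (5 * INR T)))) with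
      ((INR mN * X) * ((1 - d) ^ D - INR mN * r1 / (5 * INR T))) by ring.
    assert (0 <= INR mN * X) by nra.
    assert ((INR mN * X) * (1 - 1/50 - 2/5) <= (INR mN * X) * ((1 - d) ^ D - INR mN * r1 / (5 * INR T))).
    { apply Rmult_le_compat_l; lra. }
    simpl. nra.
  - intros i Hi. apply in_seq in Hi.
    destruct (Mp (nth i y O)) eqn:HMi; [|unfold ind; lra].
    assert (Hi0 : i <> 0%nat) by (intro; subst; congruence).
    change (ind true) with 1. rewrite !Rmult_1_l.
    rewrite PM.
    pose proof (prod_fI_lb T Sp Mp y s L r0 r1 HT Hs ltac:(fold D; lia) HL' Hr0' Hr1' HS0 HSs HSl i ltac:(lia) HMi ltac:(fold d; lra)) as Hlb.
    fold d D in Hlb. fold X in Hlb.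
    assert (Hsub : sumR (map (fun j => ind (Mp (nth j y O) && negb (Nat.eqb j i)) *
        sum_tuples (seq 1 L) D (fun k => cnt_w r0 r1 Sp Mp y k * pf (fIJ T Mp y s i j) k)) (seq 0 s))
       <= sumR (map (fun j => ind (Mp (nth j y O)) * (X * (r1 / (5 * INR T)))) (seq 0 s))).
    { apply sum_le. intros j Hj. apply in_seq in Hj.
      assert (0 <= X * (r1 / (5 * INR T))).
      { apply Rmult_le_pos; auto. unfold Rdiv; apply Rmult_le_pos; [lra|left; apply Rinv_0_lt_compat; lra]. }
      destruct (Mp (nth j y O)) eqn:HMj; [|unfold ind; simpl; lra].
      destruct (Nat.eqb_spec j i); [unfold ind; simpl; lra|]. unfold ind; simpl. rewrite !Rmult_1_l.
      unfold sum_tuples. rewrite PM.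
      pose proof (prod_fIJ_ub T Sp Mp y s L r0 r1 HT Hs ltac:(fold D; lia) HL' Hr0' Hr1' HS0 HM0 HSs HSl i ltac:(lia) HMi j ltac:(lia) HMj n) as HU.
      fold D X in HU. exact HU. }
    unfold sum_tuples in Hsub. rewrite sum_scar, m_eq in Hsub.
    assert (INR mN * r1 / (5 * INR T) * X = INR mN * (X * (r1 / (5 * INR T)))) by (unfold Rdiv; ring).
    lra. Qed.

End Core.

Lemma first_idx_spec : forall p l h, first_idx p l = Some h ->
  (h < length l)%nat /\ p (nth h l O) = true /\ forall l', (l' < h)%nat -> p (nth l' l O) = false.
Proof. induction l; simpl; intros h H; [discriminate|].
  destruct (p a) eqn:E.
  - injection H as <-. split; [lia|]. split; auto. intros; lia.
  - destruct (first_idx p l) as [h'|] eqn:E2; simpl in H; [|discriminate].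
    injection H as <-. destruct (IHl h' eq_refl) as [H1 [H2 H3]].
    split; [lia|]. split; auto. intros l' Hl'. destruct l'; auto. apply H3. lia. Qed.

Lemma countb0 : forall p l, countb p l = O -> forall i, (i < length l)%nat -> p (nth i l O) = false.
Proof. induction l; simpl; intros H i Hi; [lia|]. unfold countb in *. simpl in H.
  destruct (p a) eqn:E; simpl in H; [lia|]. destruct i; auto. apply IHl; auto. lia. Qed.

Lemma E_parse : forall Sp Mp T y, E_ev Sp Mp T y = true -> Sp (nth 0 y O) = true ->
  (T < length y)%nat ->
  exists s h, (1 <= s <= T)%nat /\ (s < length y)%nat /\ Sp (nth s y O) = true /\
    (forall l, (1 <= l < s)%nat -> Sp (nth l y O) = false) /\ (h < s)%nat /\ Mp (nth h y O) = true.
Proof. intros Sp Mp T y HE HS0 HTl. unfold E_ev in HE.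
  destruct (first_idx Mp y) as [h|] eqn:E1; [|discriminate].
  destruct (first_idx Sp (skipn (Datatypes.S h) y)) as [d|] eqn:E2; [|discriminate].
  apply andb_prop in HE as [HE1 HE2]. apply Nat.leb_le in HE1. apply Nat.eqb_eq in HE2.
  apply first_idx_spec in E1 as [H1 [H2 H3]]. apply first_idx_spec in E2 as [H4 [H5 H6]].
  rewrite length_skipn in H4. rewrite nth_skipn in H5.
  exists (Datatypes.S h + d)%nat, h. split; [lia|]. split; [lia|]. split; auto.
  split; [|split; [lia|auto]].
  intros l Hl. destruct (Nat.le_gt_cases l h).
  - destruct y as [|a y']; [simpl in H1; lia|]. simpl in HS0.
    simpl in HE2. unfold countb in HE2. simpl in HE2. rewrite HS0 in HE2. simpl in HE2.
    injection HE2 as HE2. destruct l as [|l']; [lia|]. simpl.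
    assert (Hc := countb0 Sp (firstn h y') HE2 l'). rewrite length_firstn in Hc.
    simpl in H1. rewrite nth_firstn in Hc. destruct (Nat.ltb_spec l' h); [|lia]. apply Hc. lia.
  - specialize (H6 (l - Datatypes.S h)%nat ltac:(lia)). rewrite nth_skipn in H6.
    replace (Datatypes.S h + (l - Datatypes.S h))%nat with l in H6 by lia. auto. Qed.

Lemma cnt_nonneg : forall rS rM Sp Mp y k, 1 <= rS -> 1 <= rM -> 0 <= cnt_w rS rM Sp Mp y k.
Proof. induction y; intros k H0 H1; destruct k; simpl; try lra.
  apply Rmult_le_pos; [apply rep_nonneg|apply IHy]; auto. Qed.

Lemma choose_R1 : forall T mN, (2 <= T)%nat -> (1 <= mN <= T)%nat ->
  exists jr, (jr <= Jmax T)%nat /\ (1 <= 2 ^ jr <= 2 * T)%nat /\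
    (mN * 2 ^ jr <= 2 * T)%nat /\ (T <= mN * 2 ^ jr)%nat.
Proof. intros T mN HT Hm. set (q := (2 * T / mN)%nat).
  assert (Hq : (2 <= q)%nat).
  { unfold q. apply Nat.div_le_lower_bound; lia. }
  destruct (Nat.log2_spec q ltac:(lia)) as [Hl1 Hl2].
  exists (Nat.log2 q). set (R1 := (2 ^ Nat.log2 q)%nat) in *.
  assert (HR : (2 ^ Datatypes.S (Nat.log2 q) = 2 * R1)%nat) by (unfold R1; simpl; lia).
  assert (Hdm : (2 * T = mN * q + (2 * T) mod mN)%nat) by (apply Nat.div_mod; lia).
  assert (Hmod : ((2 * T) mod mN < mN)%nat) by (apply Nat.mod_upper_bound; lia).
  assert (HqT : (q <= 2 * T)%nat) by (unfold q; apply Nat.Div0.div_le_upper_bound; nia).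
  assert (R1 >= 1)%nat by (unfold R1; apply Nat.neq_0_lt_0; apply Nat.pow_nonzero; lia).
  split; [|split; [lia|split; nia]].
  unfold Jmax. apply (Nat.pow_le_mono_r_iff 2); [lia|].
  pose proof (Nat.log2_up_spec (14 * T) ltac:(lia)) as [_ Hu]. fold R1. lia. Qed.

Lemma INR_pow2 : forall j, INR (2 ^ j) = 2 ^ j.
Proof. intros. rewrite pow_INR. simpl INR. replace (1 + 1) with 2 by ring. reflexivity. Qed.

Lemma per_path : forall T Sp Mp y, (2 <= T)%nat -> length y = Dlen T ->
  E_ev Sp Mp T y = true -> Sp (nth 0 y O) = true -> Mp (nth 0 y O) = false ->
  exists jr, (jr <= Jmax T)%nat /\
  INR T ^ 2 / 1000 <= sumR (map (fun t => sumR (map (fun t' =>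
     sum_tuples (seq 1 (100 * T * Dlen T)) (Dlen T) (fun k =>
       cnt_w (INR T / 2) (2 ^ jr) Sp Mp y k *
       ind (andb (Mp (nth t (expand y k) O)) (Sp (nth (t + t') (expand y k) O)))))
     (seq 1 (30 * T)))) (seq 1 (30 * T))).
Proof. intros T Sp Mp y HT Hly HE HS0 HM0.
  destruct (E_parse Sp Mp T y HE HS0 ltac:(unfold Dlen in Hly; lia)) as [s [h [Hs [HsD [HSs [HSl [Hh HMh]]]]]]].
  set (mN := length (filter (fun l => Mp (nth l y O)) (seq 0 s))).
  assert (HmN : (1 <= mN <= T)%nat).
  { split.
    - unfold mN. destruct (filter (fun l => Mp (nth l y O)) (seq 0 s)) eqn:F; simpl; [|lia].
      assert (In h (filter (fun l => Mp (nth l y O)) (seq 0 s))) by (apply filter_In; split; auto; apply in_seq; lia).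
      rewrite F in H. contradiction.
    - unfold mN. pose proof (filter_length_le (fun l => Mp (nth l y O)) (seq 0 s)). rewrite length_seq in H. lia. }
  destruct (choose_R1 T mN HT HmN) as [jr [Hj [HR1 [HmR HmR2]]]].
  exists jr. split; auto.
  pose proof (core_exp T Sp Mp y s (2 ^ jr) HT Hs HsD HS0 HM0 HSs HSl HR1 HmR HmR2) as HC.
  rewrite INR_pow2, Hly in HC.
  eapply Rle_trans; [apply HC|]. unfold sum_tuples.
  rewrite (sum_ext (fun t => sumR (map (fun t' => sumR (map (fun k => cnt_w (INR T / 2) (2 ^ jr) Sp Mp y k *
       ind (andb (Mp (nth t (expand y k) O)) (Sp (nth (t + t') (expand y k) O)))) (tuples (seq 1 (100 * T * Dlen T)) (Dlen T)))) (seq 1 (30 * T))))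
     (fun t => sumR (map (fun k => sumR (map (fun t' => cnt_w (INR T / 2) (2 ^ jr) Sp Mp y k *
       ind (andb (Mp (nth t (expand y k) O)) (Sp (nth (t + t') (expand y k) O)))) (seq 1 (30 * T)))) (tuples (seq 1 (100 * T * Dlen T)) (Dlen T))))).
  2:{ intros; apply sum_swap. }
  rewrite sum_swap. apply sum_le. intros k Hk.
  apply tuples_in in Hk as [Hkl Hkin].
  rewrite (sum_ext _ (fun t => cnt_w (INR T / 2) (2 ^ jr) Sp Mp y k * sumR (map (fun t' =>
       ind (andb (Mp (nth t (expand y k) O)) (Sp (nth (t + t') (expand y k) O)))) (seq 1 (30 * T))))).
  2:{ intros; rewrite sum_scal; reflexivity. }
  rewrite sum_scal. apply Rmult_le_compat_l.
  - apply cnt_nonneg. assert (2 <= INR T) by (apply (le_INR 2); auto). lra.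
    assert (1 <= 2 ^ jr) by (apply pow_R1_Rle; lra). lra.
  - unfold RHSf. apply PW; auto; try lia.
    intros l Hl. assert (In (nth l k O) k) by (apply nth_In; auto). apply Hkin in H. apply in_seq in H. lia. Qed.

Lemma Rsup_ge : forall (f : nat -> R) B L0, (forall L, f L <= B) ->
  f L0 <= Rsup (fun x => exists L, x = f L).
Proof. intros f B L0 HB. unfold Rsup.
  set (A := fun x => exists L, x = f L).
  assert (Hex : exists l, is_lub A l).
  { destruct (completeness A) as [m Hm].
    - exists B. intros x [L ->]. auto.
    - exists (f 0%nat). exists 0%nat. reflexivity.
    - exists m; auto. }
  pose proof (epsilon_spec (inhabits 0) (fun l => is_lub A l) Hex) as [H1 _].
  apply H1. exists L0. reflexivity. Qed.

Lemma chain_nonneg : forall n P x l, (forall i j, (i < n)%nat -> (j < n)%nat -> 0 <= P i j) ->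
  (x < n)%nat -> (forall z, In z l -> (z < n)%nat) -> 0 <= chain_w P x l.
Proof. intros n P x l. revert x. induction l; intros x HP Hx Hl; simpl; [lra|].
  assert (a < n)%nat by (apply Hl; left; auto).
  apply Rmult_le_pos. apply HP; auto. apply IHl; auto. intros; apply Hl; right; auto. Qed.

Lemma weight_nonneg : forall n P kappa D y, (forall i j, (i < n)%nat -> (j < n)%nat -> 0 <= P i j) ->
  (forall i, 0 <= kappa i) -> In y (tuples (seq 0 n) D) -> 0 <= path_weight kappa P y.
Proof. intros n P kappa D y HP Hk Hy. apply tuples_in in Hy as [_ Hin].
  destruct y as [|y0 l]; simpl; [lra|]. apply Rmult_le_pos; auto.
  apply (chain_nonneg n); auto.
  - assert (In y0 (seq 0 n)) by (apply Hin; left; auto). apply in_seq in H; lia.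
  - intros z Hz. assert (In z (seq 0 n)) by (apply Hin; right; auto). apply in_seq in H; lia. Qed.

Lemma pf_one : forall k, pf (fun _ _ => 1) k = 1.
Proof. induction k; simpl; auto. rewrite IHk. ring. Qed.

Lemma cnt_sum_le1 : forall rS rM Sp Mp L D y, 1 <= rS -> 1 <= rM -> length y = D ->
  sum_tuples (seq 1 L) D (fun k => cnt_w rS rM Sp Mp y k) <= 1.
Proof. intros. unfold sum_tuples. rewrite (sum_ext _ (fun k => cnt_w rS rM Sp Mp y k * pf (fun _ _ => 1) k)).
  2:{ intros; rewrite pf_one; ring. }
  fold (sum_tuples (seq 1 L) D (fun k => cnt_w rS rM Sp Mp y k * pf (fun _ _ => 1) k)).
  rewrite prod_measure by auto.
  eapply Rle_trans; [apply (prod_le _ (fun _ => 1))|].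
  - intros l _. unfold Ef. rewrite (sum_ext _ (rep_w rS rM Sp Mp (nth l y O))) by (intros; ring).
    split. apply sum_nonneg; intros; apply rep_nonneg; auto.
    destruct L as [|L']; [simpl; lra|].
    apply (rep_sum_bounds rS rM Sp Mp (nth l y O) (Datatypes.S L')); auto; lia.
  - rewrite prod_const, pow1. lra. Qed.

Lemma ln2_ge : 1/2 < ln 2.
Proof. assert (exp (1/2) * exp (1/2) = exp 1) by (rewrite <- exp_plus; f_equal; lra).
  pose proof exp_le_3. assert (0 < exp (1/2)) by apply exp_pos.
  assert (exp (1/2) < 2) by nra.
  rewrite <- (ln_exp (1/2)). apply ln_increasing; auto. Qed.

Lemma J_bound : forall T, (2 <= T)%nat -> INR (Jmax T + 1) <= 14 * ln (INR T).
Proof. intros T HT. set (l := Nat.log2_up T).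
  destruct (Nat.log2_up_spec T ltac:(lia)) as [H1 H2]. fold l in H1, H2.
  assert (Hl1 : (1 <= l)%nat) by (apply Nat.log2_up_pos; lia).
  assert (HJ : (Jmax T <= 4 + l)%nat).
  { unfold Jmax. apply Nat.log2_up_le_pow2; [lia|]. rewrite Nat.pow_add_r. simpl. lia. }
  assert (HTr : 2 <= INR T) by (apply (le_INR 2); auto).
  assert (Hp : 2 ^ (l - 1) < INR T).
  { rewrite <- INR_pow2. apply lt_INR. replace (l - 1)%nat with (Nat.pred l) by lia. auto. }
  assert (Hln : INR (l - 1) * ln 2 < ln (INR T)).
  { rewrite <- ln_pow by lra. apply ln_increasing; auto. apply pow_lt; lra. }
  pose proof ln2_ge.
  assert (ln 2 <= ln (INR T)).
  { destruct (Req_dec (INR T) 2) as [E|E]; [rewrite E; lra|]. left. apply ln_increasing; lra. }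
  assert (0 <= INR (l - 1)) by apply pos_INR.
  assert (INR (l - 1) < 2 * ln (INR T)) by nra.
  assert (INR (Jmax T + 1) <= INR (l - 1) + 6).
  { replace 6 with (INR 6) by (simpl; ring). rewrite <- plus_INR. apply le_INR. lia. }
  lra. Qed.

Lemma swap4 : forall {A B C E} (G : A -> B -> C -> E -> R) la lb lc le,
  sumR (map (fun a => sumR (map (fun b => sumR (map (fun c => sumR (map (fun e => G a b c e) le)) lc)) lb)) la)
  = sumR (map (fun e => sumR (map (fun a => sumR (map (fun b => sumR (map (fun c => G a b c e) lc)) lb)) la)) le).
Proof. intros.
  rewrite (sum_ext _ (fun a => sumR (map (fun e => sumR (map (fun b => sumR (map (fun c => G a b c e) lc)) lb)) le))).
  - apply sum_swap.
  - intros a _. rewrite (sum_ext _ (fun b => sumR (map (fun e => sumR (map (fun c => G a b c e) lc)) le))).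
    + apply sum_swap.
    + intros b _. apply sum_swap. Qed.

Lemma pull4 : forall {A B C E} (c : R) (G : A -> B -> C -> E -> R) la lb lc le,
  sumR (map (fun a => sumR (map (fun b => sumR (map (fun cc => sumR (map (fun e => c * G a b cc e) le)) lc)) lb)) la)
  = c * sumR (map (fun a => sumR (map (fun b => sumR (map (fun cc => sumR (map (fun e => G a b cc e) le)) lc)) lb)) la).
Proof. intros. rewrite <- sum_scal. apply sum_ext. intros. rewrite <- sum_scal. apply sum_ext. intros.
  rewrite <- sum_scal. apply sum_ext. intros. apply sum_scal. Qed.

Theorem mainTheorem10 :
  exists c : R, 0 < c /\
  forall (n : nat) (P : nat -> nat -> R) (S M : nat -> bool) (kappa : nat -> R) (T : nat),
    (forall i j, (i < n)%nat -> (j < n)%nat -> 0 <= P i j) ->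
    (forall i, (i < n)%nat -> sumR (map (P i) (seq 0 n)) = 1) ->
    (forall i, (i < n)%nat -> S i = true -> M i = false) ->
    (forall i, 0 <= kappa i) ->
    sumR (map kappa (seq 0 n)) = 1 ->
    (forall i, 0 < kappa i -> (i < n)%nat /\ S i = true) ->
    (2 <= T)%nat ->
    Nat.even T = true ->
    0 < probE n P kappa S M T ->
    avg_cond n P kappa S M T >= c / ln (INR T).
Proof.
  exists (1 / 12600000). split; [lra|].
  intros n P S M kappa T HP Hrow Hdisj Hk Hks Hsupp HT Heven HpE.
  set (D := Dlen T). set (L := (100 * T * D)%nat).
  assert (HTr : 2 <= INR T) by (apply (le_INR 2); auto).
  assert (HrS : 1 <= INR T / 2) by lra.
  assert (HrM : forall j, 1 <= 2 ^ j) by (intros; apply pow_R1_Rle; lra).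
  set (g := INR T ^ 2 / 1000).
  assert (HA : forall j t t', joint_partial n P kappa S M T (INR T / 2) (2 ^ j) t t' L <=
                              joint n P kappa S M T (INR T / 2) (2 ^ j) t t').
  { intros j t t'. unfold joint.
    apply (Rsup_ge (fun L' => joint_partial n P kappa S M T (INR T / 2) (2 ^ j) t t' L')
             (sum_tuples (seq 0 n) (Dlen T) (path_weight kappa P))).
    intros L'. unfold joint_partial, sum_tuples. apply sum_le. intros y Hy.
    pose proof (weight_nonneg n P kappa (Dlen T) y HP Hk Hy) as Hw.
    assert (Hyl : length y = Dlen T) by (apply tuples_in in Hy; tauto).
    pose proof (cnt_sum_le1 (INR T / 2) (2 ^ j) S M L' (Dlen T) y HrS (HrM j) Hyl) as Hc.
    unfold sum_tuples in Hc.
    eapply Rle_trans; [apply (sum_le _ (fun k => path_weight kappa P y * cnt_w (INR T / 2) (2 ^ j) S M y k))|].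
    - intros k _. pose proof (cnt_nonneg (INR T / 2) (2 ^ j) S M y k HrS (HrM j)).
      assert (0 <= path_weight kappa P y * cnt_w (INR T / 2) (2 ^ j) S M y k) by (apply Rmult_le_pos; auto).
      match goal with |- ?a * ind ?b <= _ => pose proof (ind_01 b) end.
      nra.
    - rewrite sum_scal. apply Rle_trans with (path_weight kappa P y * 1); [apply Rmult_le_compat_l; auto|lra]. }
  assert (HB : g * probE n P kappa S M T <=
     sumR (map (fun t => sumR (map (fun t' => sumR (map (fun j =>
        joint_partial n P kappa S M T (INR T / 2) (2 ^ j) t t' L) (seq 0 (Jmax T + 1)))) (seq 1 (30 * T)))) (seq 1 (30 * T)))).
  { unfold joint_partial, sum_tuples at 1. rewrite swap4.
    unfold probE, sum_tuples. rewrite <- sum_scal. apply sum_le. intros y Hy.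
    pose proof (weight_nonneg n P kappa (Dlen T) y HP Hk Hy) as Hw.
    assert (Hyl : length y = Dlen T) by (apply tuples_in in Hy; tauto).
    set (w := path_weight kappa P y).
    rewrite (sum_ext _ (fun t => sumR (map (fun t' => sumR (map (fun j => sumR (map (fun k =>
       (w * ind (E_ev S M T y)) * (cnt_w (INR T / 2) (2 ^ j) S M y k *
        ind (M (nth t (expand y k) 0%nat) && S (nth (t + t') (expand y k) 0%nat))))
       (tuples (seq 1 L) (Dlen T)))) (seq 0 (Jmax T + 1)))) (seq 1 (30 * T))))).
    2:{ intros t _. apply sum_ext. intros t' _. apply sum_ext. intros j _. apply sum_ext. intros k _.
        rewrite <- Bool.andb_assoc, ind_and. ring. }
    rewrite pull4.
    assert (HwE : 0 <= w * ind (E_ev S M T y)) by (apply Rmult_le_pos; auto; apply ind_01).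
    destruct (Req_dec (w * ind (E_ev S M T y)) 0) as [Z|Z].
    { rewrite Z. rewrite Rmult_0_l. replace (g * (w * ind (E_ev S M T y))) with (g * 0) by (rewrite Z; auto). lra. }
    destruct (E_ev S M T y) eqn:HE; [|exfalso; apply Z; unfold ind; ring].
    assert (Hwp : 0 < w).
    { unfold ind in Z, HwE. rewrite Rmult_1_r in Z, HwE. destruct HwE as [H|H]; [auto|exfalso; apply Z; auto]. }
    destruct y as [|y0 yl]; [unfold w in Hwp; simpl in Hwp; lra|].
    assert (Hky : 0 < kappa y0).
    { unfold w in Hwp. simpl in Hwp. destruct (Req_dec (kappa y0) 0) as [K|K]; [rewrite K in Hwp; lra|].
      pose proof (Hk y0). lra. }
    destruct (Hsupp y0 Hky) as [Hy0n HSy0].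
    pose proof (Hdisj y0 Hy0n HSy0) as HMy0.
    destruct (per_path T S M (y0 :: yl) HT Hyl HE HSy0 HMy0) as [jr [Hjr Hg]].
    fold D L in Hg. fold D.
    rewrite (Rmult_comm g). apply Rmult_le_compat_l; auto.
    eapply Rle_trans; [apply Hg|]. apply sum_le. intros t _. apply sum_le. intros t' _.
    fold (sum_tuples (seq 1 L) D (fun k => cnt_w (INR T / 2) (2 ^ jr) S M (y0 :: yl) k *
       ind (M (nth t (expand (y0 :: yl) k) 0%nat) && S (nth (t + t') (expand (y0 :: yl) k) 0%nat)))).
    apply (sum_ge_mem (fun j => sum_tuples (seq 1 L) D (fun k => cnt_w (INR T / 2) (2 ^ j) S M (y0 :: yl) k *
       ind (M (nth t (expand (y0 :: yl) k) 0%nat) && S (nth (t + t') (expand (y0 :: yl) k) 0%nat))))).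
    - intros j _. apply sum_nonneg. intros k _. apply Rmult_le_pos. apply cnt_nonneg; auto. apply ind_01.
    - apply in_seq. lia. }
  unfold avg_cond, cond_prob.
  set (Den := INR (30 * T) * INR (30 * T) * INR (Jmax T + 1)).
  assert (HJ := J_bound T HT).
  assert (HJ1 : 1 <= INR (Jmax T + 1)) by (apply (le_INR 1); lia).
  assert (HDen : Den = 900 * INR T ^ 2 * INR (Jmax T + 1)) by (unfold Den; rewrite mult_INR; simpl; ring).
  set (pE := probE n P kappa S M T) in *.
  assert (HS : g <= sumR (map (fun t => sumR (map (fun t' => sumR (map (fun j =>
      joint n P kappa S M T (INR T / 2) (2 ^ j) t t' / pE) (seq 0 (Jmax T + 1)))) (seq 1 (30 * T)))) (seq 1 (30 * T)))).
  { unfold Rdiv. rewrite (sum_ext _ (fun t => sumR (map (fun t' => sumR (map (fun j =>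
      joint n P kappa S M T (INR T / 2) (2 ^ j) t t') (seq 0 (Jmax T + 1)))) (seq 1 (30 * T))) * / pE)).
    2:{ intros t _. rewrite <- sum_scar. apply sum_ext. intros t' _. rewrite sum_scar. reflexivity. }
    rewrite sum_scar. apply (Rmult_le_reg_r pE); auto. rewrite Rmult_assoc, Rinv_l by lra.
    eapply Rle_trans; [apply HB|]. rewrite Rmult_1_r. apply sum_le. intros. apply sum_le. intros.
    apply sum_le. intros. apply HA. }
  apply Rle_ge.
  assert (Hln : 0 < ln (INR T)) by (rewrite <- ln_1; apply ln_increasing; lra).
  assert (0 < Den) by (rewrite HDen; nra).
  apply (Rle_trans _ (g / Den)).
  - unfold g. rewrite HDen. unfold Rdiv.
    replace (INR T ^ 2 * / 1000 * / (900 * INR T ^ 2 * INR (Jmax T + 1))) with (/ (900000 * INR (Jmax T + 1))).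
    2:{ field. split; lra. }
    apply (Rmult_le_reg_r (900000 * INR (Jmax T + 1) * ln (INR T))). nra.
    replace (1 * / 12600000 * / ln (INR T) * (900000 * INR (Jmax T + 1) * ln (INR T))) with
      (INR (Jmax T + 1) / 14) by (field; lra).
    replace (/ (900000 * INR (Jmax T + 1)) * (900000 * INR (Jmax T + 1) * ln (INR T))) with (ln (INR T)) by (field; lra).
    lra.
  - unfold Rdiv. apply Rmult_le_compat_r; [left; apply Rinv_0_lt_compat; lra|]. exact HS. Qed.
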